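(* Let $f\in\mathcal{H}^s_{4,3}$. Then $f\in\mathcal{P}^{s+}_{4,3}$ if and only if $f(0,0,0,1)\ge0$, $f(0,0,1,1)\ge0$, $f(0,1,1,1)\ge0$ and $f(1,1,1,1)\ge0$.
   Context: $\mathcal{H}^s_{4,3}$ is the real vector space of symmetric homogeneous cubic forms in $\mathbb{R}[a,b,c,d]$ (invariant under all permutations of the four variables), and $\mathcal{P}^{s+}_{4,3}=\{f\in\mathcal{H}^s_{4,3}: f(x)\ge0\text{ for all }x\in\mathbb{R}_{\ge0}^4\}$. *)

(* Defs.v *)
From HB Require Import structures.
From mathcomp Require Import all_boot all_order all_algebra.
From mathcomp Require Import mpoly.
Set Implicit Arguments. Unset Strict Implicit. Unset Printing Implicit Defensive.
Import Order.TTheory GRing.Theory Num.Theory.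
Local Open Scope ring_scope.

Definition sym_cubic_form (R : realFieldType) (f : {mpoly R[4]}) : Prop :=
  f \is 3.-homog /\ f \is symmetric.

(* P^{s+}_{4,3} membership (given f in H^s_{4,3}): nonnegative on R_{>=0}^4 *)
Definition nonneg_on_orthant (R : realFieldType) (f : {mpoly R[4]}) : Prop :=
  forall x : 'I_4 -> R, (forall i, 0 <= x i) -> 0 <= f.@[x].

Definition pt4 (R : realFieldType) (a b c d : R) : 'I_4 -> R :=
  fun i => nth 0 [:: a; b; c; d] i.

(* Main.v *)
Require Import Defs.
From HB Require Import structures.
From mathcomp Require Import all_boot all_order all_algebra.
From mathcomp Require Import mpoly.
From mathcomp Require Import perm ring lra.
Import Order.TTheory GRing.Theory Num.Theory.
Local Open Scope ring_scope.

Section Ineq.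
Variable R : realFieldType.
Implicit Types a b c d x y z : R.

Definition schur x y z := x*(x-y)*(x-z) + y*(y-x)*(y-z) + z*(z-x)*(z-y).

Lemma schur_ord x y z : 0 <= z -> z <= y -> y <= x -> 0 <= schur x y z.
Proof.
move=> hz hzy hyx.
have -> : schur x y z = (x-y)^+2*((x-z) + y) + z*((x-z)*(y-z)) by rewrite /schur; ring.
apply: addr_ge0; apply: mulr_ge0; rewrite ?sqr_ge0 //; try lra.
apply: mulr_ge0; lra.
Qed.

Lemma schur_ge0 x y z : 0 <= x -> 0 <= y -> 0 <= z -> 0 <= schur x y z.
Proof.
move=> hx hy hz.
have s1 : schur x y z = schur y x z by rewrite /schur; ring.
have s2 : schur x y z = schur x z y by rewrite /schur; ring.
have s3 : schur x y z = schur z y x by rewrite /schur; ring.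
have s4 : schur x y z = schur y z x by rewrite /schur; ring.
have s5 : schur x y z = schur z x y by rewrite /schur; ring.
case: (lerP y x) => hxy; case: (lerP z y) => hyz; case: (lerP z x) => hxz.
- by apply: schur_ord.
- lra.
- by rewrite s2; apply: schur_ord; lra.
- by rewrite s5; apply: schur_ord; lra.
- by rewrite s1; apply: schur_ord; lra.
- by rewrite s4; apply: schur_ord; lra.
- lra.
- by rewrite s3; apply: schur_ord; lra.
Qed.

Definition P3 a b c d := a ^+ 3 + b ^+ 3 + c ^+ 3 + d ^+ 3.
Definition P21 a b c d := a ^+ 2 * (b + c + d) + b ^+ 2 * (a + c + d)
                        + c ^+ 2 * (a + b + d) + d ^+ 2 * (a + b + c).
Definition P111 a b c d := a * b * c + a * b * d + a * c * d + b * c * d.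
Definition R2 a b c d := P3 a b c d - P21 a b c d + 3 * P111 a b c d.

Lemma R2_min a b c d : 0 <= d -> d <= a -> d <= b -> d <= c -> 0 <= R2 a b c d.
Proof.
move=> h0 ha hb hc.
have -> : R2 a b c d = schur (a-d) (b-d) (c-d) + 4 * d^+3 + 3 * d^+2 * ((a-d)+(b-d)+(c-d))
   + 2 * d * ((a-d)*(b-d) + (b-d)*(c-d) + (c-d)*(a-d)).
  by rewrite /R2 /P3 /P21 /P111 /schur; ring.
have hs : 0 <= schur (a-d) (b-d) (c-d) by apply: schur_ge0; lra.
have h1 : 0 <= d ^+ 3 by rewrite exprn_ge0.
have h2 : 0 <= d ^+ 2 * ((a-d)+(b-d)+(c-d)) by apply: mulr_ge0; rewrite ?exprn_ge0 //; lra.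
have h3 : 0 <= d * ((a-d)*(b-d) + (b-d)*(c-d) + (c-d)*(a-d)).
  apply: mulr_ge0 => //; apply: addr_ge0; [apply: addr_ge0|]; apply: mulr_ge0; lra.
lra.
Qed.

Lemma R2_ge0 a b c d : 0 <= a -> 0 <= b -> 0 <= c -> 0 <= d -> 0 <= R2 a b c d.
Proof.
move=> ha hb hc hd.
have sa : R2 a b c d = R2 b c d a by rewrite /R2 /P3 /P21 /P111; ring.
have sb : R2 a b c d = R2 a c d b by rewrite /R2 /P3 /P21 /P111; ring.
have sc : R2 a b c d = R2 a b d c by rewrite /R2 /P3 /P21 /P111; ring.
case: (lerP a b) => h1; case: (lerP c d) => h2; [case: (lerP a c) | case: (lerP a d) | case: (lerP b c) | case: (lerP b d)] => h3;
  first [apply: R2_min; lra | rewrite sa; apply: R2_min; lra | rewrite sb; apply: R2_min; lra | rewrite sc; apply: R2_min; lra].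
Qed.

Definition R4 a b c d := 3 * P3 a b c d - 2 * P21 a b c d + 3 * P111 a b c d.
Lemma R4_ge0 a b c d : 0 <= a -> 0 <= b -> 0 <= c -> 0 <= d -> 0 <= R4 a b c d.
Proof.
move=> ha hb hc hd.
have -> : R4 a b c d = schur a b c + schur a b d + schur a c d + schur b c d
  by rewrite /R4 /P3 /P21 /P111 /schur; ring.
by do 3 (apply: addr_ge0; last exact: schur_ge0); exact: schur_ge0.
Qed.

Definition R3 a b c d := P21 a b c d - 3 * P111 a b c d.
Lemma R3_ge0 a b c d : 0 <= a -> 0 <= b -> 0 <= c -> 0 <= d -> 0 <= R3 a b c d.
Proof.
move=> ha hb hc hd.
have -> : R3 a b c d = (a * (b - c)^+2 + b * (a - c)^+2 + c * (a-b)^+2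
   + a * (b - d)^+2 + b * (a - d)^+2 + d * (a-b)^+2
   + a * (c - d)^+2 + c * (a - d)^+2 + d * (a-c)^+2
   + b * (c - d)^+2 + c * (b - d)^+2 + d * (b-c)^+2) / 2
  by rewrite /R3 /P21 /P111; field.
apply: divr_ge0; last lra.
do 11 (apply: addr_ge0; last by apply: mulr_ge0; rewrite ?sqr_ge0).
by apply: mulr_ge0; rewrite ?sqr_ge0.
Qed.

Lemma P111_ge0 a b c d : 0 <= a -> 0 <= b -> 0 <= c -> 0 <= d -> 0 <= P111 a b c d.
Proof. by move=> ha hb hc hd; rewrite /P111; do 3 (apply: addr_ge0; last by rewrite !mulr_ge0); rewrite !mulr_ge0. Qed.

Lemma main_ineq al be ga a b c d : 0 <= a -> 0 <= b -> 0 <= c -> 0 <= d ->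
  0 <= al -> 0 <= 2 * al + 2 * be -> 0 <= 3 * al + 6 * be + ga -> 0 <= 4 * al + 12 * be + 4 * ga ->
  0 <= al * P3 a b c d + be * P21 a b c d + ga * P111 a b c d.
Proof.
move=> ha hb hc hd h1 h2 h3 h4.
have r1 := P111_ge0 a b c d ha hb hc hd; have r2 := R2_ge0 a b c d ha hb hc hd.
have r3 := R3_ge0 a b c d ha hb hc hd; have r4 := R4_ge0 a b c d ha hb hc hd.
set A := al; set B := 2 * al + 2 * be; set C := 3 * al + 6 * be + ga.
case: (lerP (3 * B / 2) C) => hC.
- have -> : al * P3 a b c d + be * P21 a b c d + ga * P111 a b c d =
     A * R2 a b c d + (C - 3 * B / 2) * P111 a b c d + B / 2 * R3 a b c d
    by rewrite /A /B /C /R2 /R3; field.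
  apply: addr_ge0; [apply: addr_ge0|]; apply: mulr_ge0 => //; rewrite /A /B /C in hC h2 h3 h4 *; lra.
- have -> : al * P3 a b c d + be * P21 a b c d + ga * P111 a b c d =
     (A - 3 * B / 2 + C) * R2 a b c d + C / 3 * R3 a b c d + (B / 2 - C / 3) * R4 a b c d
    by rewrite /A /B /C /R2 /R3 /R4; field.
  apply: addr_ge0; [apply: addr_ge0|]; apply: mulr_ge0 => //; rewrite /A /B /C in hC h2 h3 h4 *; lra.
Qed.
End Ineq.

Definition mk (a b c d : nat) : 'X_{1..4} := [multinom (nth 0%N [:: a;b;c;d] i) | i < 4].
Definition i0 : 'I_4 := @Ordinal 4 0 isT.
Definition i1 : 'I_4 := @Ordinal 4 1 isT.
Definition i2 : 'I_4 := @Ordinal 4 2 isT.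
Definition i3 : 'I_4 := @Ordinal 4 3 isT.

Lemma mkE (m : 'X_{1..4}) : m = mk (m i0) (m i1) (m i2) (m i3).
Proof. by apply/mnmP => -[[|[|[|[|i]]]] Hi] //=; rewrite mnmE //=; congr (m _); apply: val_inj. Qed.

Lemma swap01 (R : nzRingType) (f : {mpoly R[4]}) a b c d : f \is symmetric ->
  f@_(mk a b c d) = f@_(mk b a c d).
Proof.
move=> hs; rewrite -(msym_coeff (mk b a c d) (tperm i0 i1) hs); congr (_@__).
apply/mnmP => -[[|[|[|[|i]]]] Hi] //=; by rewrite !mnmE /tperm permE /=.
Qed.

Lemma prodmk (R : comNzRingType) (x : 'I_4 -> R) a b c d :
  \prod_i x i ^+ (mk a b c d) i = x i0 ^+ a * x i1 ^+ b * x i2 ^+ c * x i3 ^+ d.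
Proof.
have E: forall i j : 'I_4, val i = val j -> x i = x j by move=> i j /val_inj ->.
rewrite !big_ord_recr big_ord0 /= !mnmE /= mul1r.
by congr (x _ ^+ _ * x _ ^+ _ * x _ ^+ _ * x _ ^+ _); apply: val_inj.
Qed.

Lemma swap12 (R : nzRingType) (f : {mpoly R[4]}) a b c d : f \is symmetric ->
  f@_(mk a b c d) = f@_(mk a c b d).
Proof.
move=> hs; rewrite -(msym_coeff (mk a c b d) (tperm i1 i2) hs); congr (_@__).
apply/mnmP => -[[|[|[|[|i]]]] Hi] //=; by rewrite !mnmE /tperm permE /=.
Qed.

Lemma swap23 (R : nzRingType) (f : {mpoly R[4]}) a b c d : f \is symmetric ->
  f@_(mk a b c d) = f@_(mk a b d c).
Proof.
move=> hs; rewrite -(msym_coeff (mk a b d c) (tperm i2 i3) hs); congr (_@__).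
apply/mnmP => -[[|[|[|[|i]]]] Hi] //=; by rewrite !mnmE /tperm permE /=.
Qed.

Lemma mdeg4 (m : 'X_{1..4}) : mdeg m = (m i0 + m i1 + m i2 + m i3)%N.
Proof. rewrite {1}(mkE m) mdegE !big_ord_recr big_ord0 /= !mnmE /=. by rewrite add0n. Qed.

Lemma sum_supp (R : nzRingType) (f : {mpoly R[4]}) (F : 'X_{1..4} -> R) L :
  uniq L -> {subset msupp f <= L} -> (forall m, m \notin msupp f -> F m = 0) ->
  \sum_(m <- msupp f) F m = \sum_(m <- L) F m.
Proof.
move=> uL sub F0.
rewrite [RHS](bigID (fun m => m \in msupp f)) /= [X in _ + X]big1 ?addr0; last by move=> m /F0.
rewrite -[RHS]big_filter; apply: perm_big; apply: uniq_perm.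
- exact: msupp_uniq.
- exact: filter_uniq.
move=> m; rewrite mem_filter; case H: (m \in msupp f) => //=; by rewrite (sub _ H).
Qed.

Definition T4 : seq (nat * nat * nat * nat) := [:: (3,0,0,0)%N; (2,1,0,0)%N; (2,0,1,0)%N; (2,0,0,1)%N; (1,2,0,0)%N; (1,1,1,0)%N; (1,1,0,1)%N; (1,0,2,0)%N; (1,0,1,1)%N; (1,0,0,2)%N; (0,3,0,0)%N; (0,2,1,0)%N; (0,2,0,1)%N; (0,1,2,0)%N; (0,1,1,1)%N; (0,1,0,2)%N; (0,0,3,0)%N; (0,0,2,1)%N; (0,0,1,2)%N; (0,0,0,3)%N].
Definition mk4 (t : nat * nat * nat * nat) := mk t.1.1.1 t.1.1.2 t.1.2 t.2.
Definition Tm := map mk4 T4.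

Lemma mk4_inj : injective mk4.
Proof.
move=> [[[a b] c] d] [[[a' b'] c'] d'] /= E.
have := congr1 (fun m : 'X_{1..4} => m i0) E; have := congr1 (fun m : 'X_{1..4} => m i1) E.
have := congr1 (fun m : 'X_{1..4} => m i2) E; have := congr1 (fun m : 'X_{1..4} => m i3) E.
by rewrite /= !mnmE /= => -> -> -> ->.
Qed.

Lemma Tm_uniq : uniq Tm. Proof. by rewrite map_inj_uniq //; exact: mk4_inj. Qed.

Lemma Tm_mem (m : 'X_{1..4}) : mdeg m = 3%N -> m \in Tm.
Proof.
rewrite mdeg4 => H; rewrite (mkE m).
have -> : mk (m i0) (m i1) (m i2) (m i3) = mk4 (m i0, m i1, m i2, m i3) by [].
apply: map_f; move: (m i0) (m i1) (m i2) (m i3) H => a b c d.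
by case: a => [|[|[|[|a]]]]; case: b => [|[|[|[|b]]]]; case: c => [|[|[|[|c]]]];
   case: d => [|[|[|[|d]]]] //= => /eqP; rewrite ?addnS ?addSn.
Qed.

Lemma evalf (R : comNzRingType) (f : {mpoly R[4]}) (x : 'I_4 -> R) :
  f \is 3.-homog for mdeg -> f \is symmetric ->
  f.@[x] = f@_(mk 3 0 0 0) * (x i0 ^+ 3 + x i1 ^+ 3 + x i2 ^+ 3 + x i3 ^+ 3)
   + f@_(mk 2 1 0 0) * (x i0 ^+ 2 * (x i1 + x i2 + x i3) + x i1 ^+ 2 * (x i0 + x i2 + x i3)
                        + x i2 ^+ 2 * (x i0 + x i1 + x i3) + x i3 ^+ 2 * (x i0 + x i1 + x i2))
   + f@_(mk 1 1 1 0) * (x i0 * x i1 * x i2 + x i0 * x i1 * x i3 + x i0 * x i2 * x i3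
                        + x i1 * x i2 * x i3).
Proof.
move=> hh hs; rewrite mevalE (@sum_supp _ f _ Tm Tm_uniq).
- rewrite /Tm big_map /T4 !big_cons big_nil /mk4 /= !prodmk.
  have -> : f@_(mk 2 0 1 0) = f@_(mk 2 1 0 0) by rewrite [LHS]swap12 //.
  have -> : f@_(mk 2 0 0 1) = f@_(mk 2 1 0 0) by rewrite [LHS]swap23 // [LHS]swap12 //.
  have -> : f@_(mk 1 2 0 0) = f@_(mk 2 1 0 0) by rewrite [LHS]swap01 //.
  have -> : f@_(mk 1 1 0 1) = f@_(mk 1 1 1 0) by rewrite [LHS]swap23 //.
  have -> : f@_(mk 1 0 2 0) = f@_(mk 2 1 0 0) by rewrite [LHS]swap12 // [LHS]swap01 //.
  have -> : f@_(mk 1 0 1 1) = f@_(mk 1 1 1 0) by rewrite [LHS]swap12 // [LHS]swap23 //.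
  have -> : f@_(mk 1 0 0 2) = f@_(mk 2 1 0 0) by rewrite [LHS]swap23 // [LHS]swap12 // [LHS]swap01 //.
  have -> : f@_(mk 0 3 0 0) = f@_(mk 3 0 0 0) by rewrite [LHS]swap01 //.
  have -> : f@_(mk 0 2 1 0) = f@_(mk 2 1 0 0) by rewrite [LHS]swap01 // [LHS]swap12 //.
  have -> : f@_(mk 0 2 0 1) = f@_(mk 2 1 0 0) by rewrite [LHS]swap01 // [LHS]swap23 // [LHS]swap12 //.
  have -> : f@_(mk 0 1 2 0) = f@_(mk 2 1 0 0) by rewrite [LHS]swap01 // [LHS]swap12 // [LHS]swap01 //.
  have -> : f@_(mk 0 1 1 1) = f@_(mk 1 1 1 0) by rewrite [LHS]swap01 // [LHS]swap12 // [LHS]swap23 //.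
  have -> : f@_(mk 0 1 0 2) = f@_(mk 2 1 0 0) by rewrite [LHS]swap01 // [LHS]swap23 // [LHS]swap12 // [LHS]swap01 //.
  have -> : f@_(mk 0 0 3 0) = f@_(mk 3 0 0 0) by rewrite [LHS]swap12 // [LHS]swap01 //.
  have -> : f@_(mk 0 0 2 1) = f@_(mk 2 1 0 0) by rewrite [LHS]swap12 // [LHS]swap23 // [LHS]swap01 // [LHS]swap12 //.
  have -> : f@_(mk 0 0 1 2) = f@_(mk 2 1 0 0) by rewrite [LHS]swap12 // [LHS]swap23 // [LHS]swap01 // [LHS]swap12 // [LHS]swap01 //.
  have -> : f@_(mk 0 0 0 3) = f@_(mk 3 0 0 0) by rewrite [LHS]swap23 // [LHS]swap12 // [LHS]swap01 //.
  by ring.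
- move=> m /(dhomog_mf hh) /= /Tm_mem //.
- by move=> m; rewrite mcoeff_msupp negbK => /eqP ->; rewrite mul0r.
Qed.

Theorem corollary2p8 (R : realFieldType) (f : {mpoly R[4]}) :
  sym_cubic_form f ->
  (nonneg_on_orthant f <->
   [/\ 0 <= f.@[pt4 0 0 0 1], 0 <= f.@[pt4 0 0 1 1],
       0 <= f.@[pt4 0 1 1 1] & 0 <= f.@[pt4 1 1 1 1]]).
Proof.
move=> [hh hs]; split.
  move=> H; split; apply: H => -[[|[|[|[|i]]]] Hi] //=; exact: ler01.
case=> h1 h2 h3 h4 x hx.
set A := f@_(mk 3 0 0 0); set B := f@_(mk 2 1 0 0); set C := f@_(mk 1 1 1 0).
have e1 : f.@[pt4 0 0 0 1] = A by rewrite evalf // /pt4 /=; ring.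
have e2 : f.@[pt4 0 0 1 1] = 2 * A + 2 * B by rewrite evalf // /pt4 /=; ring.
have e3 : f.@[pt4 0 1 1 1] = 3 * A + 6 * B + C by rewrite evalf // /pt4 /=; ring.
have e4 : f.@[pt4 1 1 1 1] = 4 * A + 12 * B + 4 * C by rewrite evalf // /pt4 /=; ring.
rewrite e1 in h1; rewrite e2 in h2; rewrite e3 in h3; rewrite e4 in h4.
rewrite evalf //.
have := @main_ineq R A B C (x i0) (x i1) (x i2) (x i3) (hx i0) (hx i1) (hx i2) (hx i3) h1 h2 h3 h4.
by rewrite /P3 /P21 /P111.
Qed.
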